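(* Let $M^\star\in\mathbb{R}^{m\times n}$, $k=\min(m,n)$, and let $M^\star=P\Sigma Q^\top$ be a singular value decomposition with $P\in\mathbb{R}^{m\times k}$, $Q\in\mathbb{R}^{n\times k}$ having orthonormal columns and $\Sigma=\mathrm{diag}(\sigma_1,\dots,\sigma_k)$, $\sigma_i\ge0$. Consider, for $W\in\mathbb{R}^{m\times n}$, $$\Phi(W)=\frac14\|W-2M^\star\|_F^2+\frac1{4k}\|W\|_\star^2.$$ Then $\Phi$ admits a unique global minimizer $W^\star$. Moreover, there exists a minimizer whose left and right singular subspaces coincide with those of $M^\star$, and such a minimizer can be written as $W^\star=P\,\mathrm{diag}(w_1,\dots,w_k)\,Q^\top$, where the $w_i\ge0$ are uniquely determined by $$w_i=\max(0,\,2\sigma_i-\lambda),\quad i=1,\dots,k,\qquad\text{with}\qquad \lambda=\frac1k\sum_{j=1}^kw_j.$$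
   Context: $\|\cdot\|_F$ is the Frobenius norm and $\|\cdot\|_\star$ the nuclear norm (sum of singular values). *)

(* Defs.v *)
From mathcomp Require Import all_boot all_order all_algebra.
From mathcomp Require Import reals.
From Stdlib Require Import ClassicalEpsilon.
Set Implicit Arguments. Unset Strict Implicit. Unset Printing Implicit Defensive.
Import Order.TTheory GRing.Theory Num.Theory.
Local Open Scope ring_scope.

Section Defs.
Variable R : realType.

Definition frob2 m n (A : 'M[R]_(m, n)) : R := \sum_i \sum_j (A i j) ^+ 2.

Definition is_svd m n (W : 'M[R]_(m, n)) (U : 'M[R]_(m, minn m n))
  (s : 'rV[R]_(minn m n)) (V : 'M[R]_(n, minn m n)) : Prop :=
  [/\ U^T *m U = 1%:M, V^T *m V = 1%:M, (forall i, 0 <= s 0 i)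
    & W = U *m diag_mx s *m V^T].

Definition sing_vals m n (W : 'M[R]_(m, n)) : 'rV[R]_(minn m n) :=
  epsilon (inhabits 0) (fun s => exists U V, is_svd W U s V).

Definition nucnorm m n (W : 'M[R]_(m, n)) : R := \sum_i sing_vals W 0 i.

Definition Phi m n (M W : 'M[R]_(m, n)) : R :=
  4^-1 * frob2 (W - 2 *: M) + ((4 * (minn m n)%:R)^-1) * (nucnorm W) ^+ 2.

Definition wfix k (sigma w : 'rV[R]_k) : Prop :=
  (forall i, 0 <= w 0 i) /\
  (forall i, w 0 i = Num.max 0 (2 * sigma 0 i - (k%:R)^-1 * \sum_j w 0 j)).

End Defs.

(* Main.v *)
Require Import Defs.
From mathcomp Require Import all_boot all_order all_algebra.
From mathcomp Require Import reals.
From mathcomp Require Import complex.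
From mathcomp Require Import ring lra.
From Stdlib Require Import ClassicalEpsilon.
Import Order.TTheory GRing.Theory Num.Theory.
Set Implicit Arguments. Unset Strict Implicit. Unset Printing Implicit Defensive.
Local Open Scope ring_scope.

Section Aux.
Variable R : realType.

Lemma mx11E (M : 'M[R]_1) : M = (M 0 0)%:M.
Proof. exact: mx11_scalar. Qed.

Lemma trmx11 (M : 'M[R]_1) : M^T = M.
Proof. by rewrite [M]mx11E tr_scalar_mx. Qed.

Lemma sqnorm_eq0 n (w : 'cV[R]_n) : (w^T *m w) 0 0 = 0 -> w = 0.
Proof.
rewrite mxE => /eqP; rewrite psumr_eq0; last by move=> i _; rewrite mxE sqr_ge0.
move=> /allP H; apply/matrixP => i j; rewrite ord1 !mxE.
have /H : i \in index_enum 'I_n by rewrite mem_index_enum.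
by rewrite /= mxE -expr2 sqrf_eq0 => /eqP.
Qed.

Lemma zmod_aux (V : zmodType) (o y : V) : o - y - (y - (y + y)) = o.
Proof. by rewrite opprB addrK subrK. Qed.

Lemma householder n (z : 'cV[R]_n.+1) : z^T *m z = 1%:M ->
  exists H : 'M[R]_n.+1, H^T *m H = 1%:M /\ H *m delta_mx 0 0 = z.
Proof.
move=> zz.
pose e : 'cV[R]_n.+1 := delta_mx 0 0.
change (exists H : 'M[R]_n.+1, H^T *m H = 1%:M /\ H *m e = z).
have [ze|zne] := eqVneq z e.
  by exists 1%:M; rewrite trmx1 mul1mx mul1mx ze.
set w := z - e.
set a := (w^T *m w) 0 0.
have wnz : w != 0 by rewrite subr_eq0.
have anz : a != 0 by apply: contra wnz => /eqP /sqnorm_eq0 ->.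
set c := (e^T *m z) 0 0.
have ee : e^T *m e = 1%:M.
  rewrite [_ *m _]mx11E; congr (_%:M); rewrite !mxE (bigD1 0) //= big1 ?addr0.
    by rewrite !mxE eqxx mulr1.
  by move=> i /negbTE ni; rewrite !mxE ni mul0r.
have ez : e^T *m z = c%:M by rewrite [_ *m _]mx11E.
have ze : z^T *m e = c%:M by rewrite -[z^T *m e]trmx11 trmx_mul trmxK.
have ww : w^T *m w = a%:M by rewrite [_ *m _]mx11E.
have wwE : w^T *m w = (2 - 2 * c)%:M.
  rewrite /w mulmxBr linearB /= !mulmxBl zz ze ez ee.
  by rewrite -!raddfB; congr (_%:M); ring.
have aE : a = 2 - 2 * c by rewrite /a wwE mxE eqxx mulr1n.
have we : w^T *m e = (c - 1)%:M.
  by rewrite /w linearB /= mulmxBl ze ee -raddfB.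
exists (1%:M - (2 / a) *: (w *m w^T)); split.
  have HT : (1%:M - (2 / a) *: (w *m w^T))^T = 1%:M - (2 / a) *: (w *m w^T).
    by rewrite [LHS]linearB /= [X in _ - X]linearZ /= trmx1 trmx_mul trmxK.
  rewrite HT.
  rewrite mulmxBl !mulmxBr mul1mx mulmx1 -!scalemxAl -!scalemxAr !mulmxA.
  rewrite -(mulmxA w) ww mul_mx_scalar mul1mx -scalemxAl !scalerA.
  have -> : 2 / a * (2 / a * a) = 2 / a + 2 / a by field.
  rewrite scalerDl; set Y := _ *: (w *m w^T).
  by rewrite opprB addrK subrK.
rewrite mulmxBl mul1mx -scalemxAl -mulmxA we mul_mx_scalar scalerA.
have -> : 2 / a * (c - 1) = -1.
  have anz' := anz; rewrite aE in anz'; rewrite aE; field; exact: anz'.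
by rewrite scaleN1r opprK addrC subrK.
Qed.
Lemma real_sym_eig n (S : 'M[R]_n) : S^T = S -> S != 0 ->
  exists mu : R, mu != 0 /\ exists2 v : 'rV_n, v *m S = mu *: v & v != 0.
Proof.
move=> Ssym Snz.
pose f := real_complex R.
pose SC := map_mx f S.
have Hsym : SC \is symmetricmx.
  apply/is_hermitianmxP; rewrite expr0 scale1r map_mx_id //.
  by rewrite /SC map_trmx Ssym.
have Hreal : SC \is a mxOver Num.real.
  by apply/mxOverP => i j; rewrite mxE; apply/complex_realP; eexists.
have /orthomx_spectralP Heq := symmetric_normalmx Hsym Hreal.
have Dreal := hermitian_spectral_diag_real (realsym_hermsym Hsym Hreal).
move: Heq Dreal; set P := spectralmx SC; set D := spectral_diag SC => Heq Dreal.
have Punit : P \in unitmx by apply: spectral_unit.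
have [i Di] : exists i, D 0 i != 0.
  apply/existsP; apply: contraR Snz; rewrite negb_exists => /forallP HD.
  have D0 : D = 0 by apply/rowP => j; rewrite mxE; apply/eqP; move: (HD j); rewrite negbK.
  have : SC = 0 by rewrite Heq D0 linear0 mulmx0 mul0mx.
  by move/eqP; rewrite map_mx_eq0.
have PS : P *m SC = diag_mx D *m P.
  by rewrite Heq !mulmxA mulmxV // mul1mx.
have rS : row i P *m SC = D 0 i *: row i P.
  rewrite -row_mul PS; apply/rowP => j; rewrite !mxE.
  rewrite (bigD1 i) //= big1 ?addr0; first by rewrite !mxE eqxx mulr1n.
  by move=> l /negbTE nl; rewrite !mxE eq_sym nl mulr0n mul0r.
have rnz : row i P != 0.
  apply/eqP => r0; have := congr1 (fun M => M *m invmx P) r0.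
  rewrite -row_mul mulmxV // mul0mx => /rowP /(_ i); rewrite !mxE eqxx /=.
  by move/eqP; rewrite oner_eq0.
have ev : eigenvalue SC (D 0 i) by apply/eigenvalueP; exists (row i P).
move: (mxOverP Dreal 0 i) => /complex_realP [mu Dmu].
exists mu; split.
  by apply: contra Di; rewrite Dmu => /eqP ->.
apply/eigenvalueP; rewrite eigenvalue_root_char -(fmorph_root f) map_char_poly.
rewrite -eigenvalue_root_char.
by rewrite Dmu in ev.
Qed.

Lemma sqnorm_ge0 n (w : 'cV[R]_n) : 0 <= (w^T *m w) 0 0.
Proof. by rewrite mxE sumr_ge0 // => i _; rewrite mxE -expr2 sqr_ge0. Qed.

Lemma sing_pair m n (V : 'M[R]_(m, n)) : V != 0 ->
  exists s0 : R, exists z : 'cV_n, exists u : 'cV_m,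
    [/\ 0 < s0, z^T *m z = 1%:M, u^T *m u = 1%:M, V *m z = s0 *: u
      & V^T *m u = s0 *: z].
Proof.
move=> Vnz.
set S := V^T *m V.
have ST : S^T = S by rewrite /S trmx_mul trmxK.
have Snz : S != 0.
  apply: contra Vnz => /eqP S0; apply/eqP/matrixP => i j; rewrite mxE.
  have : (col j V)^T *m col j V = 0.
    by rewrite colE trmx_mul mulmxA -(mulmxA _ V^T V) -/S S0 mulmx0 mul0mx.
  move=> /(congr1 (fun M : 'M[R]_1 => M 0 0)); rewrite [X in _ = X]mxE => /sqnorm_eq0.
  by move/matrixP => /(_ i 0); rewrite !mxE.
have [mu [munz [v vS vnz]]] := real_sym_eig ST Snz.
set q := (v *m v^T) 0 0.
have hq : q = ((v^T)^T *m v^T) 0 0 by rewrite trmxK.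
have qpos : 0 < q.
  rewrite lt_def; apply/andP; split; last by rewrite hq sqnorm_ge0.
  apply: contra vnz => /eqP q0; rewrite hq in q0.
  by move: (sqnorm_eq0 q0) => /(congr1 trmx); rewrite trmxK trmx0 => ->.
set z := (Num.sqrt q)^-1 *: v^T.
have sqq : 0 < Num.sqrt q by rewrite sqrtr_gt0.
have zz : z^T *m z = 1%:M.
  rewrite /z -scalemxAr [(_ *: _)^T]linearZ /= -scalemxAl trmxK scalerA [v *m v^T]mx11_scalar -/q.
  rewrite scale_scalar_mx -invfM -expr2 sqr_sqrtr ?ltW // mulVf ?gt_eqF //.
have Sz : S *m z = mu *: z.
  by rewrite /z -scalemxAr -ST -trmx_mul vS linearZ /= scalerA mulrC -scalerA.
have Vz2 : (V *m z)^T *m (V *m z) = mu%:M.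
  by rewrite trmx_mul -mulmxA (mulmxA V^T) -/S Sz -scalemxAr zz scalemx1.
have mupos : 0 < mu.
  rewrite lt_def munz /=; have := sqnorm_ge0 (V *m z); rewrite Vz2 mxE eqxx mulr1n //.
set s0 := Num.sqrt mu.
have s0pos : 0 < s0 by rewrite sqrtr_gt0.
exists s0, z, (s0^-1 *: (V *m z)); split => //.
- rewrite -scalemxAr [(_ *: _)^T]linearZ /= -scalemxAl Vz2 scalerA scale_scalar_mx.
  by rewrite -invfM -expr2 sqr_sqrtr ?ltW // mulVf ?gt_eqF.
- by rewrite scalerA divff ?gt_eqF // scale1r.
- rewrite -scalemxAr mulmxA -/S Sz scalerA.
  congr (_ *: _); rewrite -{1}(sqr_sqrtr (ltW mupos)) -/s0 expr2 mulrA mulVf ?gt_eqF //.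
  by rewrite mul1r.
Qed.

Lemma blk1_tr_mul p q r (A : 'M[R]_(p, q)) (B : 'M[R]_(p, r)) :
  (block_mx (1%:M : 'M_1) 0 0 A)^T *m block_mx (1%:M : 'M_1) 0 0 B =
  block_mx (1%:M : 'M_1) 0 0 (A^T *m B).
Proof.
rewrite tr_block_mx !trmx0 trmx1 mulmx_block !mulmx0 !mul0mx !addr0 !add0r.
by rewrite mulmx1.
Qed.

Lemma blk_reassemble p q r (U' : 'M[R]_(p, r)) (s' : 'rV[R]_r)
  (Z' : 'M[R]_(q, r)) (a : R) :
  block_mx (1%:M : 'M_1) 0 0 U' *m diag_mx (row_mx (a%:M : 'rV_1) s')
    *m (block_mx (1%:M : 'M_1) 0 0 Z')^T =
  block_mx (a%:M : 'M_1) 0 0 (U' *m diag_mx s' *m Z'^T).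
Proof.
rewrite diag_mx_row tr_block_mx !trmx0 trmx1 mulmx_block.
rewrite !mulmx0 !mul0mx !addr0 !add0r mul1mx mulmx_block.
rewrite !mulmx0 !mul0mx !addr0 !add0r mulmx1.
have -> : diag_mx (a%:M : 'rV_1) = a%:M.
  by apply/matrixP => i j; rewrite !ord1 !mxE eqxx.
by [].
Qed.

Lemma svd_gen m n k : k = minn m n -> forall V : 'M[R]_(m, n),
  exists U : 'M[R]_(m, k), exists s : 'rV[R]_k, exists Z : 'M[R]_(n, k),
    [/\ U^T *m U = 1%:M, Z^T *m Z = 1%:M, (forall i, 0 <= s 0 i)
      & V = U *m diag_mx s *m Z^T].
Proof.
elim: m n k => [|m IH] n k hk V.
  rewrite min0n in hk; subst k.
  exists 0, 0, 0; split; try by apply/matrixP => -[].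
  by move=> i; rewrite mxE.
case: n V hk => [|n] V hk.
  rewrite minn0 in hk; subst k.
  exists 0, 0, 0; split; try by apply/matrixP => -[].
  - by move=> i; rewrite mxE.
  - by apply/matrixP => i [].
rewrite minnSS in hk; subst k.
have [->|Vnz] := eqVneq V 0.
  exists (pid_mx (minn m n).+1), 0, (pid_mx (minn m n).+1); split => //.
  - by rewrite tr_pid_mx mul_pid_mx !minnn minnSS minnA minnn pid_mx_1.
  - by rewrite tr_pid_mx mul_pid_mx !minnn minnSS minnCA minnn pid_mx_1.
  - by move=> i; rewrite mxE.
  - by rewrite linear0 mulmx0 mul0mx.
have [s0 [z [u [s0pos zz uu Vz Vu]]]] := sing_pair Vnz.
have [Hu [Hu1 Hue]] := householder uu.
have [Hz [Hz1 Hze]] := householder zz.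
have Hu1' := mulmx1C Hu1.
have Hz1' := mulmx1C Hz1.
set B := Hu^T *m V *m Hz.
have Be : B *m (delta_mx 0 0 : 'cV_n.+1) = s0 *: (delta_mx 0 0 : 'cV_m.+1).
  rewrite /B -mulmxA Hze -mulmxA Vz -scalemxAr -Hue mulmxA Hu1 mul1mx //.
have eB : (delta_mx 0 0 : 'rV_m.+1) *m B = s0 *: (delta_mx 0 0 : 'rV_n.+1).
  apply: (can_inj (@trmxK _ _ _)).
  rewrite trmx_mul trmx_delta /B !trmx_mul trmxK -!mulmxA Hue Vu -scalemxAr -Hze mulmxA Hz1 mul1mx.
  by rewrite linearZ /= trmx_delta.
have Bdef : B = Hu^T *m V *m Hz by [].
clearbody B.
have Bcol0 : forall i, B i 0 = s0 * (i == 0)%:R.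
  move=> i; move: (congr1 (fun M : 'cV[R]_m.+1 => M i 0) Be).
  by rewrite -colE !mxE eqxx andbT.
have Brow0 : forall j, B 0 j = s0 * (j == 0)%:R.
  move=> j; move: (congr1 (fun M : 'rV[R]_n.+1 => M 0 j) eB).
  by rewrite -rowE !mxE eqxx.
have Bcol : forall i j, nat_of_ord j = 0%N -> B i j = s0 * (nat_of_ord i == 0%N)%:R.
  by move=> i j j0; have -> : j = 0 by apply/val_inj.
have Brow : forall i j, nat_of_ord i = 0%N -> B i j = s0 * (nat_of_ord j == 0%N)%:R.
  by move=> i j i0; have -> : i = 0 by apply/val_inj.
have ul : ulsubmx (B : 'M_(1 + m, 1 + n)) = s0%:M.
  by apply/matrixP => i j; rewrite !ord1 !mxE Brow //= mulr1.
have ur : ursubmx (B : 'M_(1 + m, 1 + n)) = 0.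
  by apply/matrixP => i j; rewrite !ord1 !mxE Brow //= mulr0.
have dl : dlsubmx (B : 'M_(1 + m, 1 + n)) = 0.
  by apply/matrixP => i j; rewrite !ord1 !mxE Bcol //= mulr0.
have BE : B = block_mx (s0%:M : 'M_1) 0 0 (drsubmx (B : 'M_(1 + m, 1 + n))).
  by rewrite -ul -ur -dl submxK.
have [U' [s' [Z' [U'1 Z'1 s'0 B'E]]]] := IH n (minn m n) erefl (drsubmx (B : 'M_(1 + m, 1 + n))).
exists (Hu *m block_mx (1%:M : 'M_1) 0 0 U'), (row_mx (s0%:M : 'rV_1) s'),
  (Hz *m block_mx (1%:M : 'M_1) 0 0 Z'); split.
- rewrite trmx_mul mulmxA -(mulmxA _ Hu^T) Hu1 mulmx1 blk1_tr_mul U'1 -scalar_mx_block //.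
- rewrite trmx_mul mulmxA -(mulmxA _ Hz^T) Hz1 mulmx1 blk1_tr_mul Z'1 -scalar_mx_block //.
- move=> i; rewrite mxE; case: splitP => j _.
    by rewrite ord1 mxE eqxx mulr1n ltW.
  exact: s'0.
- rewrite trmx_mul !mulmxA -(mulmxA Hu) -(mulmxA Hu) blk_reassemble -B'E -BE Bdef.
  by rewrite !mulmxA Hu1' mul1mx -mulmxA Hz1' mulmx1.
Qed.

Definition dotm m n (A B : 'M[R]_(m, n)) : R := \tr (A^T *m B).

Lemma frob2E m n (A : 'M[R]_(m, n)) : frob2 A = dotm A A.
Proof.
rewrite /frob2 /dotm /mxtrace exchange_big /=; apply: eq_bigr => j _.
by rewrite mxE; apply: eq_bigr => i _; rewrite mxE expr2.
Qed.

Lemma dotmDr m n (A B C : 'M[R]_(m, n)) : dotm A (B + C) = dotm A B + dotm A C.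
Proof. by rewrite /dotm mulmxDr mxtraceD. Qed.

Lemma dotmDl m n (A B C : 'M[R]_(m, n)) : dotm (A + B) C = dotm A C + dotm B C.
Proof. by rewrite /dotm linearD /= mulmxDl mxtraceD. Qed.

Lemma dotmZr m n a (A B : 'M[R]_(m, n)) : dotm A (a *: B) = a * dotm A B.
Proof. by rewrite /dotm -scalemxAr mxtraceZ. Qed.

Lemma dotmZl m n a (A B : 'M[R]_(m, n)) : dotm (a *: A) B = a * dotm A B.
Proof. by rewrite /dotm linearZ /= -scalemxAl mxtraceZ. Qed.

Lemma dotmC m n (A B : 'M[R]_(m, n)) : dotm A B = dotm B A.
Proof. by rewrite /dotm -mxtrace_tr trmx_mul trmxK. Qed.

Lemma dotmNr m n (A B : 'M[R]_(m, n)) : dotm A (- B) = - dotm A B.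
Proof. by rewrite -scaleN1r dotmZr mulN1r. Qed.

Lemma dotmBr m n (A B C : 'M[R]_(m, n)) : dotm A (B - C) = dotm A B - dotm A C.
Proof. by rewrite dotmDr dotmNr. Qed.

Lemma frob2_ge0 m n (A : 'M[R]_(m, n)) : 0 <= frob2 A.
Proof. by apply: sumr_ge0 => i _; apply: sumr_ge0 => j _; apply: sqr_ge0. Qed.

Lemma frob2_eq0 m n (A : 'M[R]_(m, n)) : frob2 A = 0 -> A = 0.
Proof.
move=> /eqP; rewrite psumr_eq0 => [/allP H|i _]; last first.
  by apply: sumr_ge0 => j _; apply: sqr_ge0.
apply/matrixP => i j; rewrite mxE.
have /H /= : i \in index_enum 'I_m by rewrite mem_index_enum.
rewrite psumr_eq0 => [/allP H2|l _]; last by apply: sqr_ge0.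
have /H2 /= : j \in index_enum 'I_n by rewrite mem_index_enum.
by rewrite sqrf_eq0 => /eqP.
Qed.

Lemma bessel p k l (X : 'M[R]_(p, k)) (U : 'M[R]_(p, l)) :
  X^T *m X = 1%:M -> U^T *m U = 1%:M ->
  forall j, \sum_i ((X^T *m U) i j) ^+ 2 <= 1.
Proof.
move=> XX UU j.
set A := X^T *m U.
set E := U - X *m A.
have EE : E^T *m E = 1%:M - A^T *m A.
  rewrite /E mulmxBr [(U - _)^T]linearB /= !mulmxBl trmx_mul UU.
  have UX : U^T *m X = A^T by rewrite /A trmx_mul trmxK.
  rewrite -!mulmxA -/A (mulmxA X^T X) XX mul1mx (mulmxA U^T) UX.
  by rewrite subrr subr0.
have : 0 <= (E^T *m E) j j.
  by rewrite mxE; apply: sumr_ge0 => i _; rewrite mxE -expr2 sqr_ge0.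
rewrite EE !mxE eqxx mulr1n subr_ge0.
by congr (_ <= _); apply: eq_bigr => i _; rewrite mxE expr2.
Qed.

Lemma gab_le (g a b : R) : 0 <= g <= 1 -> g * (a * b) <= (a ^+ 2 + b ^+ 2) / 2.
Proof.
move=> /andP [g0 g1].
have h1 : 0 <= (a - g * b) ^+ 2 by apply: sqr_ge0.
have h2 : 0 <= (1 - g ^+ 2) * b ^+ 2.
  apply: mulr_ge0; last by apply: sqr_ge0.
  by rewrite subr_ge0 expr_le1.
nra.
Qed.

Lemma dual_bound m n k1 k2 (X : 'M[R]_(m, k1)) (Y : 'M[R]_(n, k1)) (g : 'rV[R]_k1)
  (U : 'M[R]_(m, k2)) (s : 'rV[R]_k2) (Z : 'M[R]_(n, k2)) :
  X^T *m X = 1%:M -> Y^T *m Y = 1%:M -> (forall i, 0 <= g 0 i <= 1) ->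
  U^T *m U = 1%:M -> Z^T *m Z = 1%:M -> (forall j, 0 <= s 0 j) ->
  dotm (X *m diag_mx g *m Y^T) (U *m diag_mx s *m Z^T) <= \sum_j s 0 j.
Proof.
move=> XX YY g01 UU ZZ s0.
rewrite /dotm !trmx_mul trmxK tr_diag_mx -!mulmxA mxtrace_mulC !mulmxA.
rewrite -(mulmxA (diag_mx g) X^T U) -(mulmxA _ Z^T Y).
set A := X^T *m U; set B := Z^T *m Y.
have eq1 : \tr (diag_mx g *m A *m diag_mx s *m B) =
    \sum_j \sum_i g 0 i * (A i j * B j i) * s 0 j.
  rewrite /mxtrace (eq_bigr (fun i => \sum_j g 0 i * (A i j * B j i) * s 0 j)).
    by rewrite exchange_big.
  move=> i _; rewrite mxE; apply: eq_bigr => j _.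
  rewrite mul_mx_diag mul_diag_mx !mxE; ring.
rewrite eq1; apply: ler_sum => j _.
have hA : \sum_i A i j ^+ 2 <= 1 by apply: bessel.
have BE : B = (Y^T *m Z)^T by rewrite trmx_mul trmxK.
have hB : \sum_i B j i ^+ 2 <= 1.
  rewrite BE; under eq_bigr do rewrite mxE; exact: bessel.
apply: (le_trans (y := \sum_i ((A i j ^+ 2 + B j i ^+ 2) / 2) * s 0 j)).
  by apply: ler_sum => i _; apply: ler_wpM2r => //; apply: gab_le.
rewrite -mulr_suml -mulr_suml big_split /=.
move: hA hB (s0 j); set a := \sum_i _; set b := \sum_i _ => hA hB hs.
nra.
Qed.

Lemma svd_exists m n (V : 'M[R]_(m, n)) :
  exists U s Z, is_svd V U s Z.
Proof.
have [U [s [Z [UU ZZ s0 VE]]]] := svd_gen (erefl (minn m n)) V.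
by exists U, s, Z; split.
Qed.

Lemma sing_vals_svd m n (V : 'M[R]_(m, n)) :
  exists U Z, is_svd V U (sing_vals V) Z.
Proof.
rewrite /sing_vals; apply: (epsilon_spec (inhabits 0) (fun s => exists U Z, is_svd V U s Z)).
have [U [s [Z H]]] := svd_exists V.
by exists s, U, Z.
Qed.

Lemma dotm_svd_self m n k (U : 'M[R]_(m, k)) (s : 'rV[R]_k) (Z : 'M[R]_(n, k)) :
  U^T *m U = 1%:M -> Z^T *m Z = 1%:M ->
  dotm (U *m diag_mx (const_mx 1) *m Z^T) (U *m diag_mx s *m Z^T) = \sum_j s 0 j.
Proof.
move=> UU ZZ.
have -> : diag_mx (const_mx 1 : 'rV[R]_k) = 1%:M.
  by apply/matrixP => i j; rewrite !mxE.
rewrite mulmx1 /dotm trmx_mul trmxK -!mulmxA (mulmxA U^T) UU mul1mx.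
rewrite mxtrace_mulC -mulmxA ZZ mulmx1 mxtrace_diag //.
Qed.

Lemma nuc_svd m n (W : 'M[R]_(m, n)) U s Z :
  is_svd W U s Z -> nucnorm W = \sum_j s 0 j.
Proof.
move=> [UU ZZ s0 WE].
have [U' [Z' [UU' ZZ' s0' WE']]] := sing_vals_svd W.
have g01 : forall i, 0 <= (const_mx 1 : 'rV[R]_(minn m n)) 0 i <= 1.
  by move=> i; rewrite mxE ler01 lexx.
rewrite /nucnorm; apply/eqP; rewrite eq_le; apply/andP; split.
  rewrite -(dotm_svd_self (sing_vals W) UU' ZZ') -WE' WE.

  exact: (dual_bound UU' ZZ' g01 UU ZZ s0).
rewrite -(dotm_svd_self s UU ZZ) -WE [X in dotm _ X]WE'.
exact: (dual_bound UU ZZ g01 UU' ZZ' s0').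
Qed.

Lemma nuc_ge m n k (X : 'M[R]_(m, k)) (Y : 'M[R]_(n, k)) (g : 'rV[R]_k) (V : 'M[R]_(m, n)) :
  X^T *m X = 1%:M -> Y^T *m Y = 1%:M -> (forall i, 0 <= g 0 i <= 1) ->
  dotm (X *m diag_mx g *m Y^T) V <= nucnorm V.
Proof.
move=> XX YY g01.
have [U [Z [UU ZZ s0 VE]]] := sing_vals_svd V.
rewrite /nucnorm {1}VE; by apply: dual_bound.
Qed.

Lemma wfix_exists k (sigma : 'rV[R]_k) : (forall i, 0 <= sigma 0 i) ->
  exists w, wfix sigma w.
Proof.
case: k sigma => [|k] sigma hs.
  by exists 0; split => -[].
set K : R := k.+1%:R.
have Kpos : 0 < K by rewrite ltr0n.
pose phi (S : {set 'I_k.+1}) := 2 * (\sum_(i in S) sigma 0 i) / (K + #|S|%:R).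
have [S0 _ HS0] := @arg_maxP _ _ _ set0 xpredT phi erefl.
set lam := phi S0.
have dpos : forall S : {set 'I_k.+1}, 0 < K + #|S|%:R.
  by move=> S; apply: ltr_wpDr.
have H1 : forall S : {set 'I_k.+1}, 2 * \sum_(i in S) sigma 0 i <= lam * (K + #|S|%:R).
  by move=> S; move: (HS0 S isT) => /=; rewrite {1}/phi ler_pdivrMr.
have H2 : 2 * \sum_(i in S0) sigma 0 i = lam * (K + #|S0|%:R).
  by rewrite /lam /phi divfK // gt_eqF.
have sumS : forall S : {set 'I_k.+1},
    \sum_(i in S) (2 * sigma 0 i - lam) = 2 * \sum_(i in S) sigma 0 i - #|S|%:R * lam.
  by move=> S; rewrite sumrB -mulr_sumr sumr_const [_%:R * lam]mulr_natl.
pose w := \row_i Num.max 0 (2 * sigma 0 i - lam).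
have sumw : \sum_j w 0 j = K * lam.
  apply/eqP; rewrite eq_le; apply/andP; split.
    set T := [set i | 0 <= 2 * sigma 0 i - lam].
    have -> : \sum_j w 0 j = \sum_(i in T) (2 * sigma 0 i - lam).
      rewrite [RHS]big_mkcond /=; apply: eq_bigr => i _.
      by rewrite mxE inE maxEle.
    rewrite sumS; move: (H1 T); move: (\sum_(i in T) sigma 0 i) (#|T|%:R) => a b; clear -Kpos; lra.
  apply: (le_trans (y := \sum_(i in S0) (2 * sigma 0 i - lam))).
    by rewrite sumS; move: H2; move: (\sum_(i in S0) sigma 0 i) (#|S0|%:R) => a b; clear -Kpos; lra.
  rewrite big_mkcond /=; apply: ler_sum => i _.
  rewrite mxE; case: (i \in S0); rewrite le_max lexx ?orbT //.
exists w; split.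
  by move=> i; rewrite mxE le_max lexx.
by move=> i; rewrite sumw mulrA mulVf ?gt_eqF // mul1r mxE.
Qed.

Lemma wfix_unique k (sigma : 'rV[R]_k) w1 w2 :
  wfix sigma w1 -> wfix sigma w2 -> w1 = w2.
Proof.
case: k sigma w1 w2 => [|k] sigma w1 w2.
  by move=> _ _; apply/rowP => -[].
set K : R := k.+1%:R.
have Kpos : 0 < K by rewrite ltr0n.
have key : forall a b, wfix sigma a -> wfix sigma b ->
    K^-1 * \sum_j a 0 j <= K^-1 * \sum_j b 0 j ->
    K^-1 * \sum_j b 0 j <= K^-1 * \sum_j a 0 j.
  move=> a b [_ ha] [_ hb] hab.
  apply: ler_wpM2l; first by rewrite invr_ge0 ltW.
  apply: ler_sum => i _; rewrite ha hb.
  by apply: le_max2 => //; apply: lerB.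
move=> h1 h2.
have leq : K^-1 * \sum_j w1 0 j = K^-1 * \sum_j w2 0 j.
  case: (leP (K^-1 * \sum_j w1 0 j) (K^-1 * \sum_j w2 0 j)) => h.
    by apply/eqP; rewrite eq_le h key.
  by apply/eqP; rewrite eq_le key ?(ltW h).
apply/rowP => i; case: h1 => _ ->; case: h2 => _ ->.
by rewrite -/K leq.
Qed.

Lemma dotmNl m n (A B : 'M[R]_(m, n)) : dotm (- A) B = - dotm A B.
Proof. by rewrite dotmC dotmNr dotmC. Qed.

Lemma dotmBl m n (A B C : 'M[R]_(m, n)) : dotm (A - B) C = dotm A C - dotm B C.
Proof. by rewrite dotmDl dotmNl. Qed.

Lemma phi_opt m n (M : 'M[R]_(m, n)) (P : 'M[R]_(m, minn m n)) (Q : 'M[R]_(n, minn m n))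
  (sigma : 'rV[R]_(minn m n)) :
  P^T *m P = 1%:M -> Q^T *m Q = 1%:M -> (forall i, 0 <= sigma 0 i) ->
  M = P *m diag_mx sigma *m Q^T ->
  forall w, wfix sigma w -> forall V,
  Phi M (P *m diag_mx w *m Q^T) + 4^-1 * frob2 (V - P *m diag_mx w *m Q^T) <= Phi M V.
Proof.
move=> hP hQ hs hM w [w0 wE] V.
set k := minn m n.
set W := P *m diag_mx w *m Q^T.
set a := \sum_j w 0 j.
set lam := (k%:R)^-1 * a.
have a0 : 0 <= a by apply: sumr_ge0.
have lam0 : 0 <= lam by apply: mulr_ge0 => //; rewrite invr_ge0 ler0n.
have aux : forall i, 2 * sigma 0 i <= lam -> lam * (2 * sigma 0 i / lam) = 2 * sigma 0 i.
  move=> i hi; have [l0|lnz] := eqVneq lam 0.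
    have h2 : 2 * sigma 0 i <= 0 by rewrite -l0.
    have : sigma 0 i = 0.
      by apply/eqP; rewrite eq_le hs andbT; move: h2; rewrite pmulr_rle0.
    by move=> ->; rewrite !(mulr0, mul0r).
  rewrite mulrC divfK //.
pose g := \row_i (if 0 < w 0 i then 1 else 2 * sigma 0 i / lam) : 'rV[R]_k.
have wi : forall i, w 0 i = if 0 <= 2 * sigma 0 i - lam then 2 * sigma 0 i - lam else 0.
  by move=> i; rewrite wE maxEle.
have g01 : forall i, 0 <= g 0 i <= 1.
  move=> i; rewrite mxE; case: ifP => wpos; first by rewrite ler01 lexx.
  have hi : 2 * sigma 0 i <= lam.
    have wle : w 0 i <= 0 by rewrite leNgt wpos.
    have h : 2 * sigma 0 i - lam <= w 0 i by rewrite wE le_max lexx orbT.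
    by have := le_trans h wle; rewrite subr_le0.
  have [l0|lnz] := eqVneq lam 0; first by rewrite l0 invr0 mulr0 lexx ler01.
  have lpos : 0 < lam by rewrite lt_def lnz lam0.
  apply/andP; split; first by apply: divr_ge0 => //; apply: mulr_ge0.
  by rewrite ler_pdivrMr // mul1r.
have gid : forall i, w 0 i - 2 * sigma 0 i + lam * g 0 i = 0.
  move=> i; rewrite mxE; have hwi := wi i.
  case: (leP 0 (2 * sigma 0 i - lam)) hwi => hx ->.
    case: ltP => hpos.
      by rewrite mulr1; ring.
    have e : 2 * sigma 0 i - lam = 0 by apply/le_anti; rewrite hx hpos.
    by rewrite aux ?subrK ?e // -subr_le0 e.
  rewrite ltxx aux; first by rewrite sub0r addNr.
  by rewrite -subr_le0 ltW.
have gw : forall i, g 0 i * w 0 i = w 0 i.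
  move=> i; rewrite mxE; case: ifP => wpos; first by rewrite mul1r.
  have -> : w 0 i = 0 by apply/eqP; rewrite eq_le w0 andbT leNgt wpos.
  by rewrite mulr0.
clearbody g.
set G := P *m diag_mx g *m Q^T.
have e : W + lam *: G = 2 *: M.
  have v0 : w - 2 *: sigma + lam *: g = 0.
    by apply/rowP => i; rewrite !mxE gid.
  have v1 : w + lam *: g = 2 *: sigma.
    by move/eqP: v0; rewrite addrAC subr_eq0 => /eqP.
  have lin3 : forall (A B : 'rV[R]_k) (c : R),
      P *m diag_mx A *m Q^T + c *: (P *m diag_mx B *m Q^T) = P *m diag_mx (A + c *: B) *m Q^T.
    move=> A B c; apply: esym.
    by rewrite raddfD /= linearZ /= mulmxDr mulmxDl -scalemxAr -scalemxAl.
  rewrite /W /G lin3 v1 hM linearZ /=.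
  by rewrite -scalemxAr -scalemxAl.
have eW : W - 2 *: M = - (lam *: G) by rewrite -e opprD addrA subrr add0r.
have eV : V - 2 *: M = (V - W) - lam *: G by rewrite -e opprD addrA.
set D := V - W in eV *.
have nW : nucnorm W = a by apply: (nuc_svd (U:=P) (Z:=Q)); split.
have dGW : dotm G W = a.
  rewrite /dotm /G /W !trmx_mul trmxK tr_diag_mx -!mulmxA (mulmxA P^T P) hP mul1mx.
  rewrite mxtrace_mulC -!mulmxA hQ mulmx1 /mxtrace; apply: eq_bigr => i _.
  by rewrite mul_diag_mx !mxE eqxx mulr1n gw.
have nV : dotm G V <= nucnorm V by apply: nuc_ge.
have dGV : dotm G V = a + dotm G D by rewrite -dGW -dotmDr /D addrC subrK.
clearbody D.
have f1 : dotm (- (lam *: G)) (- (lam *: G)) = lam ^+ 2 * dotm G G.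
  by rewrite dotmNl dotmNr opprK dotmZl dotmZr expr2 mulrA.
have f2 : dotm (D - lam *: G) (D - lam *: G) =
    dotm D D - 2 * lam * dotm G D + lam ^+ 2 * dotm G G.
  by rewrite dotmBl !dotmBr !dotmZl !dotmZr (dotmC D G); ring.
rewrite /Phi eW eV nW !frob2E f1 f2.
set c := (4 * (minn m n)%:R)^-1.
have hc : lam = 4 * c * a.
  by rewrite /c /lam invfM mulrA mulfV ?mul1r // pnatr_eq0.
have c0 : 0 <= c by rewrite /c invr_ge0 mulr_ge0 // ler0n.
move: nV; rewrite dGV hc.
move: (nucnorm V) (dotm G D) (dotm D D) (dotm G G) => x t dd gg hx.
have h1 : 0 <= c * (x - a) ^+ 2 by apply: mulr_ge0 => //; apply: sqr_ge0.
have h2 : 0 <= c * a * (x - a - t).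
  by apply: mulr_ge0; [apply: mulr_ge0 | rewrite subr_ge0 lerBrDl].
clear -h1 h2.
nra.
Qed.
End Aux.

Unset Implicit Arguments.

Theorem lemmaB6 (R : realType) (m n : nat) (Mstar : 'M[R]_(m, n))
  (P : 'M[R]_(m, minn m n)) (Q : 'M[R]_(n, minn m n))
  (sigma : 'rV[R]_(minn m n))
  (hP : P^T *m P = 1%:M) (hQ : Q^T *m Q = 1%:M)
  (hsigma : forall i, 0 <= sigma 0 i)
  (hM : Mstar = P *m diag_mx sigma *m Q^T) :
  (exists! W : 'M[R]_(m, n), forall V, Phi Mstar W <= Phi Mstar V) /\
  (exists! w : 'rV[R]_(minn m n), wfix sigma w) /\
  (forall w : 'rV[R]_(minn m n), wfix sigma w ->
     forall V, Phi Mstar (P *m diag_mx w *m Q^T) <= Phi Mstar V).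
Proof.
have opt := phi_opt hP hQ hsigma hM.
have weak : forall w, wfix sigma w -> forall V,
    Phi Mstar (P *m diag_mx w *m Q^T) <= Phi Mstar V.
  move=> w hw V; apply: le_trans (opt w hw V).
  by rewrite lerDl mulr_ge0 ?invr_ge0 ?frob2_ge0.
have [w hw] := wfix_exists hsigma.
split; last split => //.
  exists (P *m diag_mx w *m Q^T); split; first exact: weak.
  move=> W' hW'.
  have h1 := opt w hw W'.
  have h2 := hW' (P *m diag_mx w *m Q^T).
  have hf : frob2 (W' - P *m diag_mx w *m Q^T) = 0.
    apply/eqP; rewrite eq_le frob2_ge0 andbT.
    have := le_trans h1 h2; rewrite -lerBrDl subrr pmulr_rle0 //.
    by rewrite invr_gt0.
  by apply/eqP; rewrite eq_sym -subr_eq0; apply/eqP; apply: frob2_eq0.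
exists w; split => // w' hw'; exact: wfix_unique hw hw'.
Qed.
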